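(* Let $\mathfrak{H}:\mathcal{M}^{gen}\to\underline{\mathcal{P}}$ be a functor satisfying: (I) for every finite metric space $(X,d_X)$, $\mathfrak{H}(X,d_X)$ is a persistent set $(X,\theta_X^{\mathfrak{H}})$ with underlying set $X$, and for every morphism $f$, $\mathfrak{H}(f)=f$ as a set map; (II) for every $\delta>0$, $\mathfrak{H}(\Delta_2(\delta))=(\{p,q\},\theta)$ where $\theta(t)$ is the partition into singletons for $t<\delta$ and the single-block partition $\{\{p,q\}\}$ for $t\geq\delta$; (III) for every finite metric space $(X,d_X)$ and every $t<\mathrm{sep}(X)$, $\theta_X^{\mathfrak{H}}(t)$ is the partition of $X$ into singletons. Then $\mathfrak{H}=\mathfrak{R}$, i.e. for every finite metric space $(X,d_X)$ and every $r\geq0$, $\theta_X^{\mathfrak{H}}(r)$ is the partition of $X$ into the equivalence classes of $\sim_r$.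
   Context: $\mathcal{M}^{gen}$ is the category whose objects are finite metric spaces and whose morphisms are distance non-increasing maps. A persistent set is a pair $(X,\theta_X)$ with $X$ a finite set and $\theta_X:[0,\infty)\to\mathcal{P}(X)$ (partitions of $X$) such that $\theta_X(r)$ refines $\theta_X(s)$ whenever $r\leq s$, and for every $r$ there is $\epsilon>0$ with $\theta_X(r')=\theta_X(r)$ for all $r'\in[r,r+\epsilon]$. $\underline{\mathcal{P}}$ is the category of persistent sets whose morphisms $(X,\theta_X)\to(Y,\theta_Y)$ are set maps $f:X\to Y$ such that for every $r$, $\theta_X(r)$ refines $f^*(\theta_Y(r))$, where $f^*(P)$ is the partition of $X$ with blocks the nonempty preimages $f^{-1}(B)$, $B\in P$. $\Delta_2(\delta)$ is the metric space on $\{p,q\}$ with $d(p,q)=\delta$. $\mathrm{sep}(X)=\min_{x\neq x'}d_X(x,x')$. For $r\geq0$, $x\sim_r x'$ iff there exist $x_0=x,\ldots,x_k=x'$ in $X$ with $d_X(x_i,x_{i+1})\leq r$ for all $i$; $\mathfrak{R}(X,d_X)=(X,\theta^{\mathrm{VR}}_X)$ with $\theta^{\mathrm{VR}}_X(r)$ the partition into $\sim_r$-classes. *)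

(* Defs.v *)
From mathcomp Require Import all_boot all_order all_algebra.
From mathcomp Require Import reals.
Set Implicit Arguments. Unset Strict Implicit. Unset Printing Implicit Defensive.
Import Order.TTheory GRing.Theory Num.Theory.
Local Open Scope ring_scope.

Section Defs.
Variable R : realType.

Definition is_metric (T : finType) (d : T -> T -> R) : Prop :=
  (forall x y, 0 <= d x y) /\ (forall x y, d x y = 0 <-> x = y) /\
  (forall x y, d x y = d y x) /\ (forall x y z, d x z <= d x y + d y z).

Definition nonexpansive (T U : finType) (dT : T -> T -> R) (dU : U -> U -> R)
  (f : T -> U) : Prop := forall x x', dU (f x) (f x') <= dT x x'.

Definition refines (T : finType) (P Q : {set {set T}}) : Prop :=
  forall B, B \in P -> exists2 C, C \in Q & B \subset C.

Definition pullback_partition (T U : finType) (f : T -> U) (Q : {set {set U}})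
  : {set {set T}} := [set f @^-1: B | B : {set U} in Q & f @^-1: B != set0].

Definition persistent_set (T : finType) (theta : R -> {set {set T}}) : Prop :=
  (forall r, 0 <= r -> partition (theta r) [set: T]) /\
  (forall r s, 0 <= r -> r <= s -> refines (theta r) (theta s)) /\
  (forall r, 0 <= r -> exists2 eps, 0 < eps &
      forall r', r <= r' -> r' <= r + eps -> theta r' = theta r).

Definition singleton_partition (T : finType) : {set {set T}} :=
  [set [set x] | x : T].

(* Delta_2(delta) on {p,q} = bool *)
Definition delta2 (delta : R) (x y : bool) : R := if x == y then 0 else delta.

Definition sim_r (T : finType) (d : T -> T -> R) (r : R) : rel T :=
  connect (fun a b => d a b <= r).

Definition vr_partition (T : finType) (d : T -> T -> R) (r : R)
  : {set {set T}} := [set [set y | sim_r d r x y] | x : T].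

End Defs.

(* Main.v *)
Require Import Defs.
From mathcomp Require Import all_boot all_order all_algebra.
From mathcomp Require Import reals.
From mathcomp Require Import lra.
Import Order.TTheory GRing.Theory Num.Theory.
Local Open Scope ring_scope.

Lemma delta2_metric (R : realType) (delta : R) : 0 < delta -> is_metric (delta2 delta).
Proof.
move=> dp; rewrite /is_metric /delta2; split; last split; last split.
- by move=> x y; case: eqP => _ //; exact: ltW.
- move=> x y; case: eqP => // ne; split => // /eqP; by rewrite gt_eqF.
- by move=> x y; rewrite eq_sym.
- move=> [] [] [] /=; lra.
Qed.

Definition discd (R : realType) (T : finType) (c : R) (A B : T) : R :=
  if A == B then 0 else c.

Lemma discd_metric (R : realType) (T : finType) (c : R) : 0 < c -> is_metric (@discd R T c).
Proof.
move=> cp; rewrite /is_metric /discd; split; last split; last split.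
- by move=> x y; case: eqP => _ //; exact: ltW.
- move=> x y; case: eqP => // ne; split => // /eqP; by rewrite gt_eqF.
- by move=> x y; rewrite eq_sym.
- move=> x y z; case: (x =P z); case: (x =P y); case: (y =P z); move=> *; subst;
    try congruence; lra.
Qed.

Theorem mainTheorem9 (R : realType)
  (H : forall T : finType, (T -> T -> R) -> R -> {set {set T}})
  (Hpers : forall (T : finType) (d : T -> T -> R),
      is_metric d -> persistent_set (H T d))
  (Hfun : forall (T U : finType) (dT : T -> T -> R) (dU : U -> U -> R)
      (f : T -> U), is_metric dT -> is_metric dU -> nonexpansive dT dU f ->
      forall r, 0 <= r -> refines (H T dT r) (pullback_partition f (H U dU r)))
  (H2 : forall delta : R, 0 < delta -> forall t : R, 0 <= t ->
      H bool (delta2 delta) t =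
        if t < delta then singleton_partition bool else [set [set: bool]])
  (H3 : forall (T : finType) (d : T -> T -> R), is_metric d ->
      forall t : R, 0 <= t -> (forall x y, x != y -> t < d x y) ->
      H T d t = singleton_partition T) :
  forall (T : finType) (d : T -> T -> R), is_metric d ->
  forall r : R, 0 <= r -> H T d r = vr_partition d r.
Proof.
move=> T d dm r r0.
have dm' := dm; case: dm' => [dge0 [deq0 [dsym dtri]]].
set P := H T d r.
have Ppart : partition P [set: T] by case: (Hpers T d dm) => [+ _]; apply.
have [/eqP covP tiP _] := and3P Ppart.
set sim := sim_r d r.
have simsym : connect_sym (fun a b => d a b <= r).
  by apply: sym_connect_sym => a b; rewrite dsym.
have key : forall x y, (y \in pblock P x) = sim x y.
  move=> x y; apply/idP/idP.
  -
    move=> yx.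
    pose c := \big[Num.min/(r+1)]_(p : T * T | ~~ sim p.1 p.2) d p.1 p.2.
    have rc : r < c.
      rewrite /c; apply: (big_ind (fun v => r < v)).
      + by rewrite ltrDl.
      + by move=> a b ha hb; rewrite lt_min ha hb.
      + move=> [a b] /= nab; rewrite ltNge; apply/negP => hab.
        by move/negP: nab; apply; apply: connect1.
    have cle : forall a b, ~~ sim a b -> c <= d a b.
      move=> a b nab; rewrite /c (bigD1 (a, b)) //=.
      by rewrite ge_min lexx.
    have c0 : 0 < c by apply: le_lt_trans rc.
    pose pi := fun a : T => [set z | sim a z].
    have mY := @discd_metric R {set T} c c0.
    have ne : nonexpansive d (discd R {set T} c) pi.
      move=> a b; rewrite /discd; case: eqP => [_|hne]; first by apply: dge0.
      apply: cle; apply/negP => sab; apply: hne; apply/setP => z.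
      rewrite !inE; apply/idP/idP => h.
      * by apply: connect_trans h; rewrite simsym.
      * by apply: connect_trans sab h.
    have HY : H _ (discd R {set T} c) r = singleton_partition {set T}.
      by apply: H3 => // A B nAB; rewrite /discd (negbTE nAB).
    have := Hfun _ _ _ _ pi dm mY ne r r0.
    rewrite HY => /(_ (pblock P x)).
    have xcov : x \in cover P by rewrite covP inE.
    case=> [|C]; first exact: pblock_mem.
    case/imsetP => B; rewrite inE => /andP[/imsetP[A _ ->] _] -> sub.
    have hx : x \in pi @^-1: [set A] by apply: (subsetP sub); rewrite mem_pblock.
    have hy : y \in pi @^-1: [set A] by apply: (subsetP sub).
    rewrite !inE in hx hy.
    have : y \in pi y by rewrite inE; apply: connect0.
    by rewrite (eqP hy) -(eqP hx) inE.
  - case/connectP => p; elim: p x => [|b p IH] x /=.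
      by move=> _ ->; rewrite mem_pblock covP inE.
    case/andP => hxb hp ey.
    have hb : b \in pblock P x.
      case: (x =P b) => [<-|nxb]; first by rewrite mem_pblock covP inE.
      have dp : 0 < d x b.
        rewrite lt_def dge0 andbT; apply/negP => /eqP/deq0; exact: nxb.
      pose f := fun v : bool => if v then x else b.
      have fne : nonexpansive (delta2 (d x b)) d f.
        have dxx : forall z, d z z = 0 by move=> z; apply/deq0.
        by move=> [] [] /=; rewrite /delta2 /= ?dxx // dsym.
      have := Hfun _ _ _ _ f (delta2_metric R (d x b) dp) dm fne r r0.
      rewrite H2 // ltNge hxb /= => /(_ [set: bool]).
      case=> [|C]; first by rewrite inE.
      case/imsetP => B; rewrite inE => /andP[BP _] -> sub.
      have hx : true \in f @^-1: B by apply: (subsetP sub).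
      have hb : false \in f @^-1: B by apply: (subsetP sub).
      rewrite !inE /f in hx hb.
      by rewrite (def_pblock tiP BP hx).
    have := IH b hp ey.
    by rewrite -(same_pblock tiP hb).
rewrite -(equivalence_partition_pblock Ppart) /equivalence_partition /vr_partition.
apply/setP => B; apply/imsetP/imsetP => [[x _ ->]|[x _ ->]]; exists x => //.
- apply/setP => y; rewrite in_set in_set in_setT /=. exact: key.
- apply/setP => y; rewrite in_set in_set in_setT /=. exact: esym (key x y).
Qed.
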